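(* Let $G$ be a strongly connected digraph. The map $f_{\mathrm{imcor}}$ has at least one fixed point in $\operatorname{Adj}(G)$. Furthermore, $A^*\in\operatorname{Adj}(G)$ is a fixed point of $f_{\mathrm{imcor}}$ (i.e., $A^*\in f_{\mathrm{imcor}}(A^* )$) if and only if $A^*$ is weight-balanced.
   Context: A digraph $G=(V,E)$, $V=\{v_1,\dots,v_n\}$, $E\subseteq V\times V$; strongly connected means a directed path exists between every ordered pair of distinct vertices. $\operatorname{Adj}(G)$ is the set of $A=(a_{ij})\in\mathbb{R}^{n\times n}_{\geq0}$ with $a_{ij}>0$ iff $(v_i,v_j)\in E$. Imbalance: $\omega(v_i)=\sum_j a_{ji}-\sum_j a_{ij}$; $A$ is weight-balanced if all imbalances vanish. For $A\in\operatorname{Adj}(G)$, $a_i^*=\min\{a_{ik}:k\neq i,\ a_{ik}\neq0\}$ and $J_i^*=\{j\neq i: a_{ij}=a_i^*\}$. $f_{\mathrm{imcor}}(A)$ is the set of $B\in\operatorname{Adj}(G)$ such that for each $i$ there is $j_i^*\in J_i^*$ with $b_{ij}=a_{ij}+\omega(v_i)$ if $\omega(v_i)>0$ and $j=j_i^*$, and $b_{ij}=a_{ij}$ otherwise (imbalances computed w.r.t. $A$). *)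

(* Defs.v *)
(* Vertices v_1..v_n are the ordinals 'I_n; a digraph is an
   edge relation E : rel 'I_n (self-loops allowed, E ⊆ V × V). *)
From HB Require Import structures.
From mathcomp Require Import all_boot all_order all_algebra.
Set Implicit Arguments. Unset Strict Implicit. Unset Printing Implicit Defensive.
Import Order.TTheory GRing.Theory Num.Theory.
Local Open Scope ring_scope.

Definition strongly_connected (n : nat) (E : rel 'I_n) : Prop :=
  forall i j : 'I_n, i != j -> connect E i j.

Definition Adj (R : realFieldType) (n : nat) (E : rel 'I_n) (A : 'M[R]_n) : Prop :=
  forall i j : 'I_n, 0 <= A i j /\ (0 < A i j <-> E i j).

Definition imbalance (R : realFieldType) (n : nat) (A : 'M[R]_n) (i : 'I_n) : R :=
  \sum_(j < n) A j i - \sum_(j < n) A i j.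

Definition weight_balanced (R : realFieldType) (n : nat) (A : 'M[R]_n) : Prop :=
  forall i : 'I_n, imbalance A i = 0.

(* J_i^* = { j ≠ i : a_ij = a_i^* }, where a_i^* = min { a_ik : k ≠ i, a_ik ≠ 0 }:
   the j ≠ i with a_ij ≠ 0 and a_ij ≤ a_ik for all k ≠ i with a_ik ≠ 0. *)
Definition J_star (R : realFieldType) (n : nat) (A : 'M[R]_n) (i : 'I_n) : {set 'I_n} :=
  [set j | [&& j != i, A i j != 0 &
            [forall k, ((k != i) && (A i k != 0)) ==> (A i j <= A i k)]]].

(* B ∈ f_imcor(A) *)
Definition f_imcor (R : realFieldType) (n : nat) (E : rel 'I_n) (A B : 'M[R]_n) : Prop :=
  Adj E B /\
  forall i : 'I_n, exists2 js : 'I_n, js \in J_star A i &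
    forall j : 'I_n,
      B i j = if (0 < imbalance A i) && (j == js) then A i j + imbalance A i
              else A i j.

(* Main.v *)
Require Import Defs.
From HB Require Import structures.
From mathcomp Require Import all_boot all_order all_algebra.
From mathcomp Require Import ring lra.
Import Order.TTheory GRing.Theory Num.Theory.
Local Open Scope ring_scope.

Lemma imbD (R : realFieldType) (n : nat) (A B : 'M[R]_n) i :
  imbalance (A + B) i = imbalance A i + imbalance B i.
Proof.
rewrite /imbalance.
under eq_bigr do rewrite mxE.
under [X in _ - X]eq_bigr do rewrite mxE.
rewrite !big_split /=; lra.
Qed.

Lemma imb0 (R : realFieldType) (n : nat) i : imbalance (0 : 'M[R]_n) i = 0.
Proof.
rewrite /imbalance big1 ?big1 ?subr0 // => j _; by rewrite mxE.
Qed.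

Lemma sum_ind (R : realFieldType) (n : nat) (a : 'I_n) (c : bool) :
  \sum_(j < n) ((j == a) && c)%:R = c%:R :> R.
Proof.
rewrite (bigD1 a) //= eqxx big1 ?addr0 // => j /negPf ->; by [].
Qed.

Lemma imb_delta (R : realFieldType) (n : nat) (a b i : 'I_n) :
  imbalance (delta_mx a b : 'M[R]_n) i = (i == b)%:R - (i == a)%:R.
Proof.
rewrite /imbalance /delta_mx.
under eq_bigr do rewrite mxE.
under [X in _ - X]eq_bigr do rewrite mxE andbC.
by rewrite sum_ind sum_ind.
Qed.

Fixpoint W (R : realFieldType) (n : nat) (x : 'I_n) (p : seq 'I_n) : 'M[R]_n :=
  match p with [::] => 0 | y :: p' => delta_mx x y + W R n y p' end.

Lemma W_imb (R : realFieldType) (n : nat) (p : seq 'I_n) x i :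
  imbalance (W R n x p) i = (i == last x p)%:R - (i == x)%:R.
Proof.
elim: p x => [|y p IH] x /=; first by rewrite imb0 subrr.
rewrite imbD imb_delta IH; lra.
Qed.

Lemma W_ge0 (R : realFieldType) (n : nat) (p : seq 'I_n) x i j :
  0 <= W R n x p i j.
Proof.
elim: p x => [|y p IH] x /=; first by rewrite mxE.
by rewrite mxE addr_ge0 // mxE ler0n.
Qed.

Lemma W_E (R : realFieldType) (n : nat) (E : rel 'I_n) (p : seq 'I_n) x i j :
  path E x p -> W R n x p i j != 0 -> E i j.
Proof.
elim: p x => [|y p IH] x /=; first by rewrite mxE eqxx.
move=> /andP[hxy hp]; rewrite mxE mxE.
case: (boolP ((i == x) && (j == y))) => [/andP[/eqP -> /eqP ->] //|_].
by rewrite add0r; apply: IH.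
Qed.

Lemma exists_bal (R : realFieldType) (n : nat) (E : rel 'I_n)
  (hG : strongly_connected E) (s : seq ('I_n * 'I_n)) :
  exists M : 'M[R]_n, [/\ (forall i j, 0 <= M i j),
    (forall i j, M i j != 0 -> E i j),
    (forall e, e \in s -> E e.1 e.2 -> 0 < M e.1 e.2) &
    (forall i, imbalance M i = 0)].
Proof.
elim: s => [|[u v] s [M [M0 ME Mpos Mbal]]].
  exists 0; split => //.
  - by move=> i j; rewrite mxE.
  - by move=> i j; rewrite mxE eqxx.
  - by move=> i; rewrite imb0.
case: (boolP (E u v)) => huv; last first.
  exists M; split => // e; rewrite inE => /orP[/eqP -> /=|he]; last exact: Mpos.
  by rewrite (negPf huv).
have hc : connect E v u.
  by case: (eqVneq v u) => [->|hvu]; [exact: connect0 | exact: hG].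
case/connectP: hc => p hp hlast.
exists (M + W R n u (v :: p)); split.
- by move=> i j; rewrite mxE addr_ge0 // W_ge0.
- move=> i j; rewrite mxE.
  case: (eqVneq (M i j) 0) => [-> | hM _]; last exact: ME.
  rewrite add0r; apply: W_E; by rewrite /= huv.
- move=> e; rewrite inE => /orP[/eqP -> /= _|he he1].
    rewrite mxE /= mxE /delta_mx mxE !eqxx /=.
    have := M0 u v; have := W_ge0 R n p v u v; lra.
  rewrite mxE; have := Mpos e he he1; have := W_ge0 R n (v :: p) u e.1 e.2; lra.
- move=> i; rewrite imbD Mbal W_imb /= -hlast; lra.
Qed.

Lemma path_out (n : nat) (E : rel 'I_n) (p : seq 'I_n) (x : 'I_n) :
  path E x p -> last x p != x -> exists k, k != x /\ E x k.
Proof.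
elim: p x => [|y p IH] x /=; first by rewrite eqxx.
move=> /andP[hxy hp] hl.
case: (eqVneq y x) => [eyx|nyx]; last by exists y.
by move: hp hl; rewrite eyx; apply: IH.
Qed.

Lemma out_edge (n : nat) (E : rel 'I_n) (hn : (1 < n)%N)
  (hG : strongly_connected E) (i : 'I_n) : exists k, k != i /\ E i k.
Proof.
have h0 : (0 < n)%N by apply: ltn_trans hn.
pose j0 := Ordinal h0; pose j1 := Ordinal hn.
have [j hj] : exists j, j != i.
  case: (eqVneq i j0) => [->|h]; last by exists j0; rewrite eq_sym.
  by exists j1.
have hij : i != j by rewrite eq_sym.
have /connectP [p hp hl] := hG i j hij.
apply: (@path_out n E p i hp); by rewrite -hl.
Qed.

Lemma J_ne (R : realFieldType) (n : nat) (E : rel 'I_n) (hn : (1 < n)%N)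
  (hG : strongly_connected E) (A : 'M[R]_n) (hA : Adj E A) (i : 'I_n) :
  exists js, js \in J_star A i.
Proof.
have [k [hki hik]] := out_edge _ _ hn hG i.
have hAk : (k != i) && (A i k != 0).
  by rewrite hki /=; have [_ /(_ hik)] := (proj2 (hA i k)); rewrite lt0r => /andP[].
exists [arg min_(j < k | (j != i) && (A i j != 0)) A i j]%O.
case: arg_minP => // j /andP[hj1 hj2] hmin.
rewrite inE hj1 hj2 /=; apply/forallP => l; apply/implyP => hl.
exact: hmin.
Qed.

Lemma sum_imb (R : realFieldType) (n : nat) (A : 'M[R]_n) :
  \sum_i imbalance A i = 0.
Proof.
rewrite /imbalance sumrB exchange_big /=; exact: subrr.
Qed.

Theorem lemma4p2 (R : realFieldType) (n : nat) (E : rel 'I_n)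
    (hn : (1 < n)%N) (hG : strongly_connected E) :
  (exists A : 'M[R]_n, Adj E A /\ f_imcor E A A) /\
  (forall A : 'M[R]_n, Adj E A -> (f_imcor E A A <-> weight_balanced A)).
Proof.
have key : forall A : 'M[R]_n, Adj E A -> (f_imcor E A A <-> weight_balanced A).
  move=> A hA; split.
    move=> [_ hf].
    have hle : forall k, imbalance A k <= 0.
      move=> k; have [js _ hjs] := hf k.
      rewrite leNgt; apply/negP => hpos.
      move: (hjs js); rewrite eqxx hpos /= => h.
      have : imbalance A k = 0 by lra.
      move: hpos; lra.
    move=> i.
    have h := @psumr_eq0P R _ predT (fun k => - imbalance A k).
    have := h (fun k _ => ltac:(rewrite oppr_ge0; exact: hle k)).
    rewrite sumrN sum_imb oppr0 => /(_ erefl i erefl) /eqP.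
    by rewrite oppr_eq0 => /eqP.
  move=> hb; split => // i.
  have [js hjs] := J_ne _ _ _ hn hG _ hA i.
  by exists js => // j; rewrite hb ltxx.
split => //.
have [M [M0 ME Mpos Mbal]] := exists_bal R n E hG (enum [set: 'I_n * 'I_n]).
have hM : Adj E M.
  move=> i j; split => //; split.
    by rewrite lt0r => /andP[/ME].
  by move=> hij; apply: (Mpos (i, j)) => //; rewrite mem_enum inE.
exists M; split => //.
by apply/key.
Qed.
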